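(* Let $i\le k$ be positive integers and let $\rho$ be an $i$-polymatroid on $E$ that is an excluded minor for $\mathcal{D}_k$. Then for each $j$ with $i\le j\le k$, the $j$-dual of $\rho$ is an excluded minor for $\mathcal{D}_k$, and so is the $j$-polymatroid $\rho^j$ defined by $\rho^j(X)=\rho(X)+(j-i)|X|$ for $X\subseteq E$.
   Context: A polymatroid on $E$ is a function $\rho:2^E\to\mathbb{Z}$ that is normalized, non-decreasing and submodular; it is an $i$-polymatroid if $\rho(\{e\})\le i$ for all $e$. Any $i$-polymatroid is a $j$-polymatroid for $j\ge i$; its $j$-dual is $X\mapsto j|X|-\rho(E)+\rho(E-X)$. $\mathcal{D}_k$ is the class of polymatroids expressible as $r_{M_1}+\cdots+r_{M_k}$ for matroids $M_1,\dots,M_k$ on the ground set. Deletion and contraction: $\rho_{\backslash A}(X)=\rho(X)$, $\rho_{/A}(X)=\rho(X\cup A)-\rho(A)$ for $X\subseteq E-A$; minors are $(\rho_{\backslash A})_{/B}$ with $A,B$ disjoint, proper if $A\cup B\ne\emptyset$. An excluded minor for $\mathcal{D}_k$ is a polymatroid not in $\mathcal{D}_k$ all of whose proper minors are in $\mathcal{D}_k$. *)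

(* Defs.v *)
(* A polymatroid on a ground set E is modelled as a pair
   (E, rho) with E : {set T} for a finite type T and rho : {set T} -> int;
   only the values of rho on subsets of E matter. *)
From mathcomp Require Import all_boot all_order all_algebra.
Set Implicit Arguments. Unset Strict Implicit. Unset Printing Implicit Defensive.
Import Order.TTheory GRing.Theory Num.Theory.
Local Open Scope ring_scope.

Section Poly.
Variable T : finType.

Definition polymatroid (E : {set T}) (rho : {set T} -> int) : Prop :=
  [/\ rho set0 = 0,
      (forall X Y : {set T}, Y \subset E -> X \subset Y -> rho X <= rho Y) &
      (forall X Y : {set T}, X \subset E -> Y \subset E ->
          rho (X :|: Y) + rho (X :&: Y) <= rho X + rho Y)].

Definition ipolymatroid (i : nat) (E : {set T}) (rho : {set T} -> int) : Prop :=
  polymatroid E rho /\ (forall e, e \in E -> rho [set e] <= i%:Z).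

Definition matroid_rank (E : {set T}) (r : {set T} -> int) : Prop :=
  [/\ (forall X : {set T}, X \subset E -> 0 <= r X <= #|X|%:Z),
      (forall X Y : {set T}, Y \subset E -> X \subset Y -> r X <= r Y) &
      (forall X Y : {set T}, X \subset E -> Y \subset E ->
          r (X :|: Y) + r (X :&: Y) <= r X + r Y)].

Definition inD (k : nat) (E : {set T}) (rho : {set T} -> int) : Prop :=
  exists rs : 'I_k -> ({set T} -> int),
    (forall m, matroid_rank E (rs m)) /\
    (forall X : {set T}, X \subset E -> rho X = \sum_(m < k) rs m X).

(* the minor (rho \ A) / B, a polymatroid on E - (A u B) *)
Definition minor_fun (rho : {set T} -> int) (B : {set T}) : {set T} -> int :=
  fun X => rho (X :|: B) - rho B.

Definition excluded_minor (k : nat) (E : {set T}) (rho : {set T} -> int) : Prop :=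
  [/\ polymatroid E rho, ~ inD k E rho &
      (forall A B : {set T}, A \subset E -> B \subset E -> [disjoint A & B] ->
          A :|: B != set0 ->
          inD k (E :\: (A :|: B)) (minor_fun rho B))].

Definition jdual (j : nat) (E : {set T}) (rho : {set T} -> int) : {set T} -> int :=
  fun X => (j * #|X|)%:Z - rho E + rho (E :\: X).

Definition shift_poly (i j : nat) (rho : {set T} -> int) : {set T} -> int :=
  fun X => rho X + ((j - i) * #|X|)%:Z.

End Poly.

(* Main.v *)
Require Import Defs.
From mathcomp Require Import all_boot all_order all_algebra zify.
Import Order.TTheory GRing.Theory Num.Theory.
Set Implicit Arguments. Unset Strict Implicit.
Local Open Scope ring_scope.

Ltac bdec := rewrite ?inE; repeat match goal with
  | |- context [?x \in ?A] => case: (x \in A)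
  | |- context [?x == ?y] => case: (x == y) end; done.

Lemma sub_imp {T : finType} {A B : {set T}} : A \subset B -> forall z, (z \in A) ==> (z \in B).
Proof. by move=> /subsetP H z; apply/implyP/H. Qed.

Lemma subadd (T : finType) (E : {set T}) (f : {set T} -> int) :
  (forall X : {set T}, X \subset E -> 0 <= f X) ->
  (forall X Y : {set T}, X \subset E -> Y \subset E -> f (X :|: Y) + f (X :&: Y) <= f X + f Y) ->
  forall Y Z : {set T}, Y \subset E -> Z \subset E -> f (Y :|: Z) <= f Y + \sum_(z in Z) f [set z].
Proof.
move=> f0 fsub Y Z YE.
move: {2}#|Z| (erefl #|Z|) => n; elim: n Z => [|n IH] Z cZ ZE.
  by rewrite (cards0_eq cZ) setU0 big_set0 addr0.
have /set0Pn [z zZ] : Z != set0 by rewrite -card_gt0 cZ.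
rewrite (big_setD1 _ zZ) /=.
have cZ' : #|Z :\ z| = n by move: cZ; rewrite (cardsD1 z Z) zZ add1n => -[].
have Z'E : Z :\ z \subset E by apply: subset_trans (subsetDl _ _) ZE.
have zE : [set z] \subset E by rewrite sub1set (subsetP ZE).
have H1 := IH _ cZ' Z'E.
have YZ'E : Y :|: Z :\ z \subset E by rewrite subUset YE.
have H2 := fsub _ _ YZ'E zE.
have H3 := f0 ((Y :|: Z :\ z) :&: [set z]) (subset_trans (subsetIr _ _) zE).
have -> : Y :|: Z = (Y :|: Z :\ z) :|: [set z].
  apply/setP => x; rewrite !inE; case: (eqVneq x z) => [->|]; rewrite ?zZ ?orbT //=.
  by rewrite orbF.
move: H1 H2 H3; set s := (\sum_(_ in _) _); lia.
Qed.

Lemma loops_rank (T : finType) (E L Y : {set T}) r : matroid_rank E r ->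
  Y \subset E -> L \subset E -> (forall c, c \in L -> r [set c] = 0) ->
  r (Y :|: L) = r Y.
Proof.
case=> H0 Hm Hs YE LE HL.
have := @subadd T E r (fun X XE => proj1 (andP (H0 X XE))) Hs _ _ YE LE.
rewrite big1 ?addr0 // => H.
apply/eqP; rewrite eq_le H Hm ?subsetUl //.
by rewrite subUset YE.
Qed.
Lemma sum_card_int (U : finType) (S : {set U}) : \sum_(z in S) (1 : int) = #|S|%:Z.
Proof. by rewrite sumr_const natz. Qed.

Lemma rank_sing (T : finType) (E : {set T}) r z : matroid_rank E r -> z \in E ->
  0 <= r [set z] <= 1.
Proof. by case=> H0 _ _ zE; have := H0 [set z]; rewrite cards1 sub1set zE; apply. Qed.

Lemma key_dual (T : finType) (E C X Y : {set T}) r : matroid_rank E r ->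
  C \subset E -> (forall c, c \in C -> r [set c] = 0) ->
  X \subset Y -> Y \subset E ->
  r (E :\: X) + #|X :\: C|%:Z <= r (E :\: Y) + #|Y :\: C|%:Z.
Proof.
move=> Hr CE HC XY YE; have Hr' := Hr; case: Hr' => H0 Hm Hs.
set A := (E :\: Y) :|: ((Y :\: X) :\: C).
have AE : A \subset E.
  by rewrite subUset subsetDl; apply: subset_trans (subsetDl _ _) _; apply: subset_trans (subsetDl _ _) YE.
have LE : (Y :\: X) :&: C \subset E by apply: subset_trans (subsetIr _ _) CE.
have e1 : E :\: X = A :|: ((Y :\: X) :&: C).
  apply/setP => z; move: (sub_imp XY z) (sub_imp YE z); rewrite /A; bdec.
rewrite e1 (loops_rank Hr AE LE); last by move=> c; rewrite inE => /andP[_ /HC].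
have YXE : (Y :\: X) :\: C \subset E by apply: subset_trans (subsetDl _ _) _; apply: subset_trans (subsetDl _ _) YE.
have H1 := @subadd T E r (fun X XE => proj1 (andP (H0 X XE))) Hs _ _ (subsetDl E Y) YXE.
have H2 : \sum_(z in (Y :\: X) :\: C) r [set z] <= #|(Y :\: X) :\: C|%:Z.
  rewrite -sum_card_int; apply: ler_sum => z zin.
  by have /andP[] := rank_sing Hr (subsetP YXE z zin).
have H3 := cardsID X (Y :\: C).
have e2 : (Y :\: C) :&: X = X :\: C.
  apply/setP => z; move: (sub_imp XY z); bdec.
have e3 : (Y :\: C) :\: X = (Y :\: X) :\: C.
  apply/setP => z; bdec.
rewrite e2 e3 in H3.
move: H1 H2; rewrite -/A; set s := (\sum_(_ in _) _) => H1 H2.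
have H4 : (#|X :\: C|%:Z + #|Y :\: X :\: C|%:Z = #|Y :\: C|%:Z)%R by rewrite -H3.
lia.
Qed.

Lemma dual_matroid (T : finType) (E C : {set T}) r : matroid_rank E r ->
  C \subset E -> (forall c, c \in C -> r [set c] = 0) ->
  matroid_rank E (fun X => #|X :\: C|%:Z - r E + r (E :\: X)).
Proof.
move=> Hr CE HC; have Hr' := Hr; case: Hr' => H0 Hm Hs; split.
- move=> X XE; apply/andP; split.
    have := key_dual Hr CE HC (sub0set X) XE.
    rewrite setD0 set0D cards0; lia.
  have := Hm (E :\: X) E (subxx E) (subsetDl _ _).
  have : (#|X :\: C| <= #|X|)%N by apply: subset_leq_card; apply: subsetDl.
  lia.
- move=> X Y YE XY; have := key_dual Hr CE HC XY YE; lia.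
- move=> X Y XE YE.
  have H1 := Hs (E :\: X) (E :\: Y) (subsetDl _ _) (subsetDl _ _).
  rewrite -setDUr -setDIr in H1.
  have H2 := cardsUI (X :\: C) (Y :\: C).
  have e1 : (X :\: C) :|: (Y :\: C) = (X :|: Y) :\: C by apply/setP => z; bdec.
  have e2 : (X :\: C) :&: (Y :\: C) = (X :&: Y) :\: C by apply/setP => z; bdec.
  rewrite e1 e2 in H2.
  have H3 : (#|(X :|: Y) :\: C|%:Z + #|(X :&: Y) :\: C|%:Z = #|X :\: C|%:Z + #|Y :\: C|%:Z)%R.
    by rewrite -!PoszD H2.
  lia.
Qed.

Lemma exists_sub (U : finType) (A : {set U}) n : (n <= #|A|)%N ->
  exists S : {set U}, (S \subset A) && (#|S| == n).
Proof.
elim: n => [|n IH] H.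
  by exists set0; rewrite sub0set cards0.
have [S /andP[SA /eqP cS]] := IH (ltnW H).
have : (0 < #|A :\: S|)%N by rewrite cardsD (setIidPr SA) cS subn_gt0.
rewrite card_gt0 => /set0Pn [x]; rewrite inE => /andP[xS xA].
exists (x |: S); rewrite subUset sub1set xA SA /= cardsU1 xS cS.
by [].
Qed.

Lemma sum_bool_card (U : finType) (A B : {set U}) :
  (\sum_(x in A) (x \in B : nat))%N = #|A :&: B|.
Proof.
rewrite -sum1_card big_mkcond [RHS]big_mkcond /=.
by apply: eq_bigr => x _; rewrite inE; case: (x \in A); case: (x \in B).
Qed.

Lemma sum_int_nat (I : finType) (F : I -> nat) :
  \sum_(m : I) (F m)%:Z = (\sum_(m : I) F m)%N%:Z.
Proof. by rewrite -natz natr_sum; apply: eq_bigr => m _; rewrite natz. Qed.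

Lemma dual_inD (T : finType) (E : {set T}) (tau : {set T} -> int) (j k : nat) :
  (j <= k)%N -> (forall e, e \in E -> tau [set e] <= j%:Z) ->
  inD k E tau -> inD k E (jdual j E tau).
Proof.
move=> jk Htau [rs [Hm Hs]].
pose L e := [set m : 'I_k | rs m [set e] == 0].
have r01 : forall m e, e \in E -> rs m [set e] = (m \notin L e : nat)%:Z.
  move=> m e eE; have /andP[] := rank_sing (Hm m) eE; rewrite inE.
  by case: (rs m [set e]) => [[|[|n]]|n] //=.
have cL : forall e, e \in E -> (k - j <= #|L e|)%N.
  move=> e eE; have := Htau e eE; rewrite Hs ?sub1set //.
  rewrite (eq_bigr _ (fun m _ => r01 m e eE)) sum_int_nat.
  have -> : (\sum_(m : 'I_k) (m \notin L e : nat))%N = #|~: L e|.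
    have := sum_bool_card [set: 'I_k] (~: L e).
    by rewrite setTI => <-; apply: eq_big => m; rewrite !inE.
  have := cardsC (L e); rewrite card_ord; lia.
pose Sf e := odflt set0 [pick S : {set 'I_k} | (S \subset L e) && (#|S| == (k - j)%N)].
have HS : forall e, e \in E -> (Sf e \subset L e) /\ #|Sf e| = (k - j)%N.
  move=> e eE; rewrite /Sf; case: pickP => [S /andP[? /eqP ?]|none] //=.
  by have [S HS] := exists_sub (cL e eE); rewrite none in HS.
pose C m := [set e in E | m \in Sf e].
exists (fun m X => #|X :\: C m|%:Z - rs m E + rs m (E :\: X)); split.
  move=> m; apply: dual_matroid (Hm m) _ _.
    by apply/subsetP => e; rewrite inE => /andP[].
  move=> c; rewrite inE => /andP[cE mS].
  by have [/subsetP /(_ m mS)] := HS c cE; rewrite inE => /eqP.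
move=> X XE; rewrite /jdual big_split /= big_split /= sumrN.
rewrite -!Hs ?subxx ?subsetDl //.
congr (_ - _ + _).
rewrite sum_int_nat; congr Posz; symmetry.
transitivity (\sum_(m : 'I_k) \sum_(e in X) (e \in ~: C m : nat))%N.
  by apply: eq_bigr => m _; rewrite sum_bool_card setDE.
rewrite exchange_big /=.
transitivity (\sum_(e in X) j)%N; last by rewrite sum_nat_const mulnC.
apply: eq_bigr => e eX; have eE := subsetP XE e eX.
transitivity (\sum_(m in [set: 'I_k]) (m \in ~: Sf e : nat))%N.
  by apply: eq_big => m; rewrite !inE ?eE.
rewrite sum_bool_card setTI; have [_ cS] := HS e eE.
have := cardsC (Sf e); rewrite card_ord; lia.
Qed.

Lemma ext_inD (T : finType) (E : {set T}) k (f g : {set T} -> int) :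
  inD k E f -> (forall X : {set T}, X \subset E -> f X = g X) -> inD k E g.
Proof.
move=> [rs [Hm Hs]] Hfg; exists rs; split; first exact: Hm.
by move=> X XE; rewrite -Hfg // Hs.
Qed.

Lemma ext_excl (T : finType) (E : {set T}) k (f g : {set T} -> int) :
  excluded_minor k E f -> (forall X : {set T}, X \subset E -> f X = g X) -> excluded_minor k E g.
Proof.
rewrite /excluded_minor /polymatroid; move=> [[f0 fm fs] nf fmin] Hfg; split.
- split.
  + by rewrite -Hfg ?sub0set.
  + by move=> X Y YE XY; rewrite -!Hfg //; [apply: fm | apply: subset_trans YE].
  + move=> X Y XE YE; rewrite -!Hfg ?fs //.
      by apply: subset_trans (subsetIl _ _) XE.
    by rewrite subUset XE.
- by move=> H; apply: nf; apply: ext_inD H _ => X XE; rewrite Hfg.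
- move=> A B AE BE dAB nAB; apply: ext_inD (fmin A B AE BE dAB nAB) _.
  move=> X XE; rewrite /minor_fun -!Hfg //.
  rewrite subUset BE andbT; apply: subset_trans XE (subsetDl _ _).
Qed.

Lemma poly_ge0 (T : finType) (E : {set T}) rho (X : {set T}) : polymatroid E rho ->
  X \subset E -> 0 <= rho X.
Proof. by case=> r0 rm _ XE; rewrite -r0 rm ?sub0set. Qed.

Lemma poly_le (T : finType) (E : {set T}) rho (i : nat) (Z : {set T}) : polymatroid E rho ->
  (forall e, e \in E -> rho [set e] <= i%:Z) -> Z \subset E -> rho Z <= (i * #|Z|)%N%:Z.
Proof.
move=> Hp Hi ZE; have Hp' := Hp; case: Hp' => r0 rm rs.
have := @subadd T E rho (fun X XE => poly_ge0 Hp XE) rs _ _ (sub0set E) ZE.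
rewrite set0U r0 add0r => H; apply: le_trans H _.
have -> : (i * #|Z|)%N%:Z = \sum_(z in Z) i%:Z by rewrite sumr_const -natz natrM mulr_natr natz.
apply: ler_sum => z zZ.
by rewrite Hi // (subsetP ZE).
Qed.

Lemma inter0 (T : finType) (A B : {set T}) (z : T) : [disjoint A & B] -> (z \in A) && (z \in B) = false.
Proof.
by rewrite -setI_eq0 => /eqP H; have := congr1 (fun S : {set T} => z \in S) H; rewrite !inE.
Qed.

Lemma main_dual (T : finType) (E : {set T}) rho (i j k : nat) :
  (forall e, e \in E -> rho [set e] <= i%:Z) -> excluded_minor k E rho ->
  (i <= j)%N -> (j <= k)%N -> excluded_minor k E (jdual j E rho).
Proof.
move=> Hi Hex ij jk; have Hex' := Hex; case: Hex' => Hp nD Hmin.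
have Hp' := Hp; case: Hp' => r0 rm rs.
have Hj : forall e, e \in E -> rho [set e] <= j%:Z.
  by move=> e eE; apply: le_trans (Hi e eE) _; rewrite lez_nat.
have Pd : polymatroid E (jdual j E rho).
  split.
  - by rewrite /jdual cards0 muln0 setD0; lia.
  - move=> X Y YE XY; rewrite /jdual.
    have XE : X \subset E by apply: subset_trans YE.
    have H1 := rs (E :\: Y) (Y :\: X) (subsetDl _ _) (subset_trans (subsetDl _ _) YE).
    have e1 : E :\: Y :|: Y :\: X = E :\: X.
      by apply/setP => z; move: (sub_imp XY z) (sub_imp YE z); bdec.
    have e2 : (E :\: Y) :&: (Y :\: X) = set0 by apply/setP => z; bdec.
    rewrite e1 e2 r0 addr0 in H1.
    have H2 := poly_le Hp Hj (subset_trans (subsetDl Y X) YE).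
    have H3 := cardsID X Y; rewrite (setIidPr XY) in H3.
    rewrite -H3 mulnDr; lia.
  - move=> X Y XE YE; rewrite /jdual.
    have H1 := rs (E :\: X) (E :\: Y) (subsetDl _ _) (subsetDl _ _).
    rewrite -setDUr -setDIr in H1.
    have H2 := cardsUI X Y.
    have H3 : (j * #|X :|: Y|)%N%:Z + (j * #|X :&: Y|)%N%:Z = (j * #|X|)%N%:Z + (j * #|Y|)%N%:Z.
      by rewrite -!PoszD -!mulnDr H2.
    lia.
split => //.
- move=> H; apply: nD.
  have Hd : forall e, e \in E -> jdual j E rho [set e] <= j%:Z.
    move=> e eE; rewrite /jdual cards1 muln1.
    have := rm (E :\: [set e]) E (subxx E) (subsetDl _ _); lia.
  apply: ext_inD (dual_inD jk Hd H) _ => X XE; rewrite /jdual.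
  rewrite setDv r0 setDDr setDv set0U (setIidPr XE).
  have H3 := cardsID X E; rewrite (setIidPr XE) in H3.
  rewrite -H3 mulnDr; lia.
- move=> A B AE BE dAB nAB.
  have := Hmin B A BE AE _ _; rewrite disjoint_sym setUC => /(_ dAB nAB) HB.
  set E' := E :\: (A :|: B) in HB *.
  have Hs : forall e, e \in E' -> minor_fun rho A [set e] <= j%:Z.
    move=> e eE'; have eE : e \in E by move: eE'; rewrite inE => /andP[].
    rewrite /minor_fun.
    have eE1 : [set e] \subset E by rewrite sub1set.
    have := rs [set e] A eE1 AE.
    have := poly_ge0 Hp (subset_trans (subsetIl [set e] A) eE1).
    have := Hj e eE; lia.
  apply: ext_inD (dual_inD jk Hs HB) _ => X XE'.
  rewrite /jdual /minor_fun.
  have e1 : E' :|: A = E :\: B.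
    apply/setP => z; move: (sub_imp AE z) (sub_imp BE z) (inter0 z dAB); rewrite /E'; bdec.
  have e2 : (E' :\: X) :|: A = E :\: (X :|: B).
    apply/setP => z; move: (sub_imp AE z) (sub_imp BE z) (inter0 z dAB) (sub_imp XE' z); rewrite /E'; bdec.
  have e3 : X :&: B = set0.
    apply/setP => z; move: (sub_imp XE' z); rewrite /E'; bdec.
  have H3 := cardsUI X B; rewrite e3 cards0 addn0 in H3.
  rewrite e1 e2 H3 mulnDr; lia.
Qed.

Theorem corollary4p2 (T : finType) (E : {set T}) (rho : {set T} -> int)
    (i k : nat) :
  (0 < i)%N -> (i <= k)%N ->
  ipolymatroid i E rho -> excluded_minor k E rho ->
  forall j : nat, (i <= j)%N -> (j <= k)%N ->
    excluded_minor k E (jdual j E rho) /\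
    excluded_minor k E (shift_poly i j rho).
Proof.
move=> _ ik [Hp Hi] Hex j ij jk.
have Hd := main_dual Hi Hex.
split; first exact: Hd.
have Ei := Hd i (leqnn i) ik.
have Hp' := Hp; case: Hp' => r0 rm rs.
have Hi' : forall e, e \in E -> jdual i E rho [set e] <= i%:Z.
  move=> e eE; rewrite /jdual cards1 muln1.
  have := rm (E :\: [set e]) E (subxx E) (subsetDl _ _); lia.
apply: ext_excl (main_dual Hi' Ei ij jk) _ => X XE.
rewrite /jdual /shift_poly.
rewrite setDv r0 setDDr setDv set0U (setIidPr XE).
have H3 := cardsID X E; rewrite (setIidPr XE) in H3.
rewrite -H3 mulnDr; have : (i * #|X| <= j * #|X|)%N by rewrite leq_mul2r ij orbT.
rewrite mulnBl; lia.
Qed.
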